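(* Let $Z=C_0\cup C_1$ be a Tychonoff space such that (1) $C_0\cap C_1=\emptyset$; (2) $C_0$ is an open $F_\sigma$ subset of $Z$; (3) both $C_0$ and $C_1$ (with the subspace topologies) are $\Delta$-spaces. Then $Z$ is a $\Delta$-space.
   Context: A topological space $X$ is a $\Delta$-space if for every decreasing sequence $\{D_n:n\in\omega\}$ of subsets of $X$ with $\bigcap_n D_n=\emptyset$ there is a decreasing sequence $\{V_n:n\in\omega\}$ of open subsets of $X$ with $D_n\subseteq V_n$ for all $n$ and $\bigcap_n V_n=\emptyset$. *)

(* Defs.v *)
From HB Require Import structures.
From mathcomp Require Import all_boot all_order all_algebra.
From mathcomp Require Import all_classical all_reals all_analysis.
Set Implicit Arguments. Unset Strict Implicit. Unset Printing Implicit Defensive.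
Local Open Scope classical_set_scope.

Definition decr_sets {T : Type} (D : nat -> set T) : Prop :=
  forall n, D n.+1 `<=` D n.

Definition Delta_space (T : topologicalType) : Prop :=
  forall D : nat -> set T, decr_sets D -> \bigcap_n D n = set0 ->
  exists V : nat -> set T, [/\ (forall n, open (V n)), decr_sets V,
    (forall n, D n `<=` V n) & \bigcap_n V n = set0].

(* Subsets of A are subsets of T contained in A; open subsets of A (subspace
   topology) are the traces U `&` A of open subsets U of T. *)
Definition Delta_subspace (T : topologicalType) (A : set T) : Prop :=
  forall D : nat -> set T, (forall n, D n `<=` A) -> decr_sets D ->
  \bigcap_n D n = set0 ->
  exists V : nat -> set T,
    [/\ (forall n, exists U, open U /\ V n = U `&` A), decr_sets V,
      (forall n, D n `<=` V n) & \bigcap_n V n = set0].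

Definition F_sigma (T : topologicalType) (A : set T) : Prop :=
  exists F : nat -> set T, (forall n, closed (F n)) /\ A = \bigcup_n F n.

(* Tychonoff = T_1 (here: Hausdorff) and completely regular. *)
Definition tychonoff_space (T : topologicalType) : Prop :=
  hausdorff_space T /\ completely_regular_space T.

(* Main.v *)
Require Import Defs.
From mathcomp Require Import all_boot all_order all_algebra.
From mathcomp Require Import all_classical all_reals all_analysis.
Local Open Scope classical_set_scope.

Lemma decr_le (T : Type) (D : nat -> set T) : decr_sets D ->
  forall m k, D (m + k)%N `<=` D m.
Proof.
move=> hD m; elim=> [|k IH]; first by rewrite addn0.
by rewrite addnS => x /hD /IH.
Qed.

Theorem theorem3p8 (Z : topologicalType) (C0 C1 : set Z) :
  tychonoff_space Z ->
  C0 `|` C1 = setT ->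
  C0 `&` C1 = set0 ->
  open C0 -> F_sigma C0 ->
  Delta_subspace C0 -> Delta_subspace C1 ->
  Delta_space Z.
Proof.
move=> _ hU hI oC0 [F [cF eF]] D0 D1 D dD iD.
have dsub (A : set Z) : decr_sets (fun n => D n `&` A).
  by move=> n x [/dD ? ?].
have isub (A : set Z) : \bigcap_n (D n `&` A) = set0.
  apply/seteqP; split=> // x hx; rewrite -iD => n _; by case: (hx n I).
have [V0 [oV0 dV0 sV0 iV0]] := D0 (fun n => D n `&` C0) (fun n x => @proj2 _ _) (dsub C0) (isub C0).
have [V1 [oV1 dV1 sV1 iV1]] := D1 (fun n => D n `&` C1) (fun n x => @proj2 _ _) (dsub C1) (isub C1).
have [U hU1] := choice oV1.
have oV0' n : open (V0 n).
  by have [W [oW ->]] := oV0 n; exact: openI.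
pose Up := fix Up n := if n is m.+1 then Up m `&` U m.+1 else U 0%N.
pose Fp := fix Fp n := if n is m.+1 then Fp m `|` F m.+1 else F 0%N.
have oUp n : open (Up n).
  elim: n => [|n IH] /=; first by case: (hU1 0%N).
  by apply: openI => //; case: (hU1 n.+1).
have cFp n : closed (Fp n).
  by elim: n => [|n IH] /=; [exact: cF | exact: closedU].
have FpC0 n : Fp n `<=` C0.
  elim: n => [|n IH] /= x; first by move=> h; rewrite eF; exists 0%N.
  by case=> [/IH //|h]; rewrite eF; exists n.+1.
have FFp n : F n `<=` Fp n by case: n => [//|n] /= x h; right.
have dUp : decr_sets Up by move=> n x [].
have iFp : forall m k, Fp m `<=` Fp (m + k)%N.
  move=> m; elim=> [|k IH]; first by rewrite addn0.
  by rewrite addnS => x /IH h /=; left.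
have UpU n : Up n `<=` U n by case: n => [//|n] /= x [].
have V1Up n : V1 n `<=` Up n.
  elim: n => [|n IH] x; first by rewrite (hU1 0%N).2 => -[].
  move=> hx /=; split; first by apply: IH; apply: dV1.
  by move: hx; rewrite (hU1 n.+1).2 => -[].
exists (fun n => V0 n `|` (Up n `\` Fp n)); split.
- move=> n; apply: openU => //; apply: openI => //; exact: closed_openC.
- move=> n x [h|[h1 h2]]; first by left; apply: dV0.
  right; split; first exact: dUp.
  by move=> h; apply: h2 => /=; left.
- move=> n x Dx; have : (C0 `|` C1) x by rewrite hU.
  case=> h; first by left; apply: sV0.
  right; split; first by apply: V1Up; apply: sV1.
  move=> /FpC0 h0; have : (C0 `&` C1) x by [].
  by rewrite hI.
- apply/seteqP; split=> // x hx; have : (C0 `|` C1) x by rewrite hU.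
  case=> h.
  + move: h; rewrite eF => -[k _ /FFp hk].
    rewrite -iV0 => n _.
    case: (hx (n + k)%N I) => [h|[_ h2]]; first exact: (@decr_le _ _ dV0 n k x h).
    by exfalso; apply: h2; rewrite addnC; apply: iFp.
  + rewrite -iV1 => n _.
    case: (hx n I) => [h'|[h1 _]].
      have : (C0 `&` C1) x.
        by split=> //; have [W [_ e]] := oV0 n; move: h'; rewrite e => -[].
      by rewrite hI.
    by rewrite (hU1 n).2; split=> //; apply: UpU.
Qed.
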